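(* Let $G$ be the $m\times n$ grid with $m,n\ge 2$, let $1\le z\le n$, and let $(a,b)$ be a vertex. The set $Y=\{(1,z),(m,z),(a,b)\}$ is a minimal landmark set of $G$ if and only if $b\neq z$ and $z\notin\{1,n\}$.
   Context: The $m\times n$ grid $G$ has vertex set $V=\{(i,j):1\le i\le m,\ 1\le j\le n\}$, with $(i_1,j_1),(i_2,j_2)$ adjacent iff $|i_1-i_2|+|j_1-j_2|=1$; thus $d((i_1,j_1),(i_2,j_2))=|i_1-i_2|+|j_1-j_2|$. A vertex $x$ separates $u,v$ if $d(x,u)\neq d(x,v)$. A landmark set is $L\subseteq V$ such that every pair of distinct vertices is separated by some vertex of $L$; it is minimal if no proper subset is a landmark set. *)

(* Defs.v *)
From mathcomp Require Import all_boot.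
Set Implicit Arguments. Unset Strict Implicit. Unset Printing Implicit Defensive.

Definition vtx := (nat * nat)%type.

Definition in_grid (m n : nat) (p : vtx) : Prop :=
  (1 <= p.1 <= m) /\ (1 <= p.2 <= n).

Definition absdiff (a b : nat) : nat := (a - b) + (b - a).

Definition gdist (p q : vtx) : nat := absdiff p.1 q.1 + absdiff p.2 q.2.

Definition separates (x u v : vtx) : Prop := gdist x u <> gdist x v.

Definition landmark (m n : nat) (L : vtx -> Prop) : Prop :=
  (forall x, L x -> in_grid m n x) /\
  (forall u v, in_grid m n u -> in_grid m n v -> u <> v ->
     exists x, L x /\ separates x u v).

Definition minimal_landmark (m n : nat) (L : vtx -> Prop) : Prop :=
  landmark m n L /\
  (forall S : vtx -> Prop, (forall x, S x -> L x) -> landmark m n S ->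
     forall x, L x -> S x).

(* Main.v *)
Require Import Defs.
From mathcomp Require Import all_boot.
From mathcomp Require Import zify.
From Stdlib Require Import Classical.

Lemma keep m n (L S : vtx -> Prop) x P Q :
  (forall y, L y -> y = x \/ y = P \/ y = Q) -> (forall y, S y -> L y) ->
  landmark m n S ->
  (exists u v, in_grid m n u /\ in_grid m n v /\ u <> v /\
     gdist P u = gdist P v /\ gdist Q u = gdist Q v) -> S x.
Proof.
move=> HL HS [_ Hsep] [u [v [gu [gv [uv [eP eQ]]]]]].
case: (classic (S x)) => // nSx.
have [y [Sy sy]] := Hsep u v gu gv uv.
case: (HL y (HS y Sy)) => [eyx|[eyx|eyx]]; subst y => //.
Qed.

Lemma mk_grid m n i j : 1 <= i -> i <= m -> 1 <= j -> j <= n -> in_grid m n (i, j).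
Proof. by move=> *; split; apply/andP; split. Qed.

Ltac solve_pair :=
  split; [apply: mk_grid; lia|]; split; [apply: mk_grid; lia|];
  split; [case=> *; lia|]; rewrite /gdist /absdiff /=; split; lia.

Lemma pairA m n z a b : 2 <= m -> 1 < z -> z < n -> 1 <= a <= m -> 1 <= b <= n -> b <> z ->
  exists u v, in_grid m n u /\ in_grid m n v /\ u <> v /\
     gdist (m, z) u = gdist (m, z) v /\ gdist (a, b) u = gdist (a, b) v.
Proof.
move=> hm hz1 hzn /andP[ha1 ha2] /andP[hb1 hb2] hbz.
have [hb|hb] : b < z \/ z < b by lia.
- have [ha|ha] : a <= m - 1 \/ 2 <= a by lia.
  + exists (a+1, b), (a, b+1); solve_pair.
  + exists (a, z+1), (a-1, z); solve_pair.
- have [ha|ha] : a <= m - 1 \/ 2 <= a by lia.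
  + exists (a+1, b), (a, b-1); solve_pair.
  + exists (a, z-1), (a-1, z); solve_pair.
Qed.

Lemma pairB m n z a b : 2 <= m -> 1 < z -> z < n -> 1 <= a <= m -> 1 <= b <= n -> b <> z ->
  exists u v, in_grid m n u /\ in_grid m n v /\ u <> v /\
     gdist (1, z) u = gdist (1, z) v /\ gdist (a, b) u = gdist (a, b) v.
Proof.
move=> hm hz1 hzn /andP[ha1 ha2] /andP[hb1 hb2] hbz.
have [hb|hb] : b < z \/ z < b by lia.
- have [ha|ha] : 2 <= a \/ a <= m - 1 by lia.
  + exists (a-1, b), (a, b+1); solve_pair.
  + exists (a, z+1), (a+1, z); solve_pair.
- have [ha|ha] : 2 <= a \/ a <= m - 1 by lia.
  + exists (a-1, b), (a, b-1); solve_pair.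
  + exists (a, z-1), (a+1, z); solve_pair.
Qed.

Lemma pairC m n z : 2 <= m -> 1 < z -> z < n ->
  exists u v, in_grid m n u /\ in_grid m n v /\ u <> v /\
     gdist (1, z) u = gdist (1, z) v /\ gdist (m, z) u = gdist (m, z) v.
Proof.
move=> hm hz1 hzn.
exists (1, z-1), (1, z+1); solve_pair.
Qed.


Lemma sep3 (P Q R : vtx) u v :
  (gdist P u = gdist P v -> gdist Q u = gdist Q v -> gdist R u = gdist R v -> u = v) ->
  u <> v ->
  exists x, (x = P \/ x = Q \/ x = R) /\ separates x u v.
Proof.
move=> H uv.
case: (eqVneq (gdist P u) (gdist P v)) => e1; last by exists P; split; [left|apply/eqP].
case: (eqVneq (gdist Q u) (gdist Q v)) => e2; last by exists Q; split; [right;left|apply/eqP].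
case: (eqVneq (gdist R u) (gdist R v)) => e3; last by exists R; split; [right;right|apply/eqP].
by case: uv; apply: H.
Qed.

Lemma sep2 (P Q : vtx) u v :
  (gdist P u = gdist P v -> gdist Q u = gdist Q v -> u = v) ->
  u <> v ->
  exists x, (x = P \/ x = Q) /\ separates x u v.
Proof.
move=> H uv.
case: (eqVneq (gdist P u) (gdist P v)) => e1; last by exists P; split; [left|apply/eqP].
case: (eqVneq (gdist Q u) (gdist Q v)) => e2; last by exists Q; split; [right|apply/eqP].
by case: uv; apply: H.
Qed.

Lemma absdiff_eq w x y : absdiff w x = absdiff w y -> x = y \/ x + y = 2 * w.
Proof. rewrite /absdiff; lia. Qed.
Lemma absdiff_1 i : 0 < i -> absdiff 1 i = i - 1.
Proof. rewrite /absdiff; lia. Qed.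
Lemma absdiff_m i m : i <= m -> absdiff m i = m - i.
Proof. rewrite /absdiff; lia. Qed.

Theorem mainTheorem15 (m n z a b : nat) :
  2 <= m -> 2 <= n -> 1 <= z <= n -> in_grid m n (a, b) ->
  (a, b) <> (1, z) -> (a, b) <> (m, z) ->
  (minimal_landmark m n (fun p => p = (1, z) \/ p = (m, z) \/ p = (a, b))
   <-> (b <> z /\ z <> 1 /\ z <> n)).
Proof.
move=> hm hn /andP[hz1 hzn] hab n1 n2.
have hab' := hab; case: hab' => /andP[ha1 ha2] /andP[hb1 hb2].
simpl in ha1, ha2, hb1, hb2.
split.
- move=> [[HL Hsep] Hmin].
  have hz : z <> 1 /\ z <> n.
    have H2 : z = 1 \/ z = n -> False.
      move=> hz.
      have : landmark m n (fun p => p = (1, z) \/ p = (m, z)).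
        split.
          by move=> x [->|->]; apply: mk_grid; lia.
        move=> [i j] [k l] /= [/andP[? ?] /andP[? ?]] [/andP[? ?] /andP[? ?]] uv.
        apply: sep2 => //; rewrite /gdist /absdiff /= => e1 e2.
        simpl in *; have [-> ->] : i = k /\ j = l by lia.
        by [].
      move=> /(Hmin _ _) H.
      have [e|e] : (a, b) = (1, z) \/ (a, b) = (m, z).
        apply: H; [by move=> x [->|->]; [left|right;left]| by right; right].
      exact: n1 e. exact: n2 e.
    by split => e; apply: H2; [left|right].
  split => //.
  move=> ebz; subst b.
  have [i1 [i2 _]] := (@pairC m n z hm ltac:(lia) ltac:(lia)).
  have [x [Lx sx]] := Hsep (1, z-1) (1, z+1) ltac:(apply: mk_grid; lia)
     ltac:(apply: mk_grid; lia) ltac:(case; lia).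
  move: sx; case: Lx => [->|[->|->]]; rewrite /separates /gdist /absdiff /=; lia.
- move=> [hbz [hz1' hzn']].
  have HL : forall y, (y = (1, z) \/ y = (m, z) \/ y = (a, b)) -> in_grid m n y.
    by move=> y [->|[->|->]] //; apply: mk_grid; lia.
  split.
    split => //.
    move=> [i j] [k l] /= [/andP[? ?] /andP[? ?]] [/andP[? ?] /andP[? ?]] uv.
    apply: sep3 => //; rewrite /gdist /absdiff /= => e1 e2 e3.
    simpl in *.
    move: e1 e2 e3; rewrite -!/(absdiff _ _).
    rewrite (absdiff_1 i) // (absdiff_1 k) // (absdiff_m i m) // (absdiff_m k m) //.
    set A := absdiff z j; set B := absdiff z l => e1 e2.
    have ik : i = k by lia.
    have AB : A = B by lia.
    subst k; rewrite /A /B in AB.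
    have [jl|jl] := absdiff_eq _ _ _ AB; move=> e3; first by rewrite jl.
    have e4 : absdiff b j = absdiff b l by lia.
    case: (absdiff_eq _ _ _ e4) => // jl2.
    by f_equal. by move: jl jl2 hbz; clear; lia.
  move=> S HS HSl x [->|[->|->]].
  + apply: (keep _ _ _ _ (1, z) (m, z) (a, b) _ HS HSl) => //.
    apply: pairA => //; try lia; apply/andP; split; lia.
  + apply: (keep _ _ _ _ (m, z) (1, z) (a, b) _ HS HSl).
      by move=> y [->|[->|->]]; [right;left|left|right;right].
    apply: pairB => //; try lia; apply/andP; split; lia.
  + apply: (keep _ _ _ _ (a, b) (1, z) (m, z) _ HS HSl).
      by move=> y [->|[->|->]]; [right;left|right;right|left].
    apply: pairC; lia.
Qed.
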